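(* Let $f\colon[0,\infty)\to\mathbb{R}$ be continuous and suppose there are $c\in\mathbb R$, $\epsilon>0$ with $f(\zeta)-c/\zeta=O(\zeta^{-1-\epsilon})$ as $\zeta\to\infty$, and let $F(z)=\int_0^\infty f(\zeta)\zeta^{-z}\,d\zeta$ (absolutely convergent for $0<\operatorname{Re} z<1$). Fix an integer $N\ge1$ and $z\in\mathbb C$ with $0<\operatorname{Re}z<1/N$. For $s>0$ define complex numbers $\phi_s(w)$ for all rooted forests $w$ with $|w|\le N$ recursively by $\phi_s(\mathbb 1)=1$, $\phi_s(w w')=\phi_s(w)\phi_s(w')$, and $$\phi_s(B_+(w))=\int_0^\infty f(\zeta)\,(s\zeta)^{-z}\,\phi_{s\zeta}(w)\,d\zeta .$$ Then all these integrals converge and for every forest $w$ with $|w|\le N$ and every $s>0$, $$\phi_s(w)=s^{-z|w|}\prod_{v\in V(w)}F\big(z\,|w_v|\big).$$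
   Context: Rooted forests, $|w|$ (number of nodes), $V(w)$ (set of nodes), $\mathbb 1$ (empty forest), product of forests = disjoint union, $B_+$ (grafting all trees of a forest onto a new root), and $w_v$ (the subtree of $w$ rooted at node $v$, consisting of $v$ and its descendants) are as in the Connes–Kreimer Hopf algebra of rooted trees. *)

(* Defs.v *)
From Stdlib Require Import Reals Lra Lia List ClassicalEpsilon.
Open Scope R_scope.

Definition Cx : Type := (R * R)%type.
Definition RtoCx (r : R) : Cx := (r, 0).
Definition Cx1 : Cx := (1, 0).
Definition Cx0 : Cx := (0, 0).
Definition Cxmul (u v : Cx) : Cx :=
  (fst u * fst v - snd u * snd v, fst u * snd v + snd u * fst v).
Definition Cxscale (k : R) (u : Cx) : Cx := (k * fst u, k * snd u).

(* t^(-z) = exp(-z ln t) for t > 0 and complex z *)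
Definition cpow_neg (t : R) (z : Cx) : Cx :=
  (exp (- fst z * ln t) * cos (snd z * ln t),
   - (exp (- fst z * ln t) * sin (snd z * ln t))).

Definition improper_int_0_inf (g : R -> R) (l : R) : Prop :=
  (forall a b, 0 < a -> a <= b -> inhabited (Riemann_integrable g a b)) /\
  forall eps, 0 < eps -> exists d M, 0 < d /\ 0 < M /\
    forall a b (pr : Riemann_integrable g a b),
      0 < a -> a < d -> M < b -> Rabs (RiemannInt pr - l) < eps.

Definition cint (g : R -> Cx) (L : Cx) : Prop :=
  improper_int_0_inf (fun x => fst (g x)) (fst L) /\
  improper_int_0_inf (fun x => snd (g x)) (snd L).

(* the value of the (convergent) integral; 0 if it does not converge *)
Definition cint_val (g : R -> Cx) : Cx :=
  match excluded_middle_informative (exists L, cint g L) with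
  | left H => proj1_sig (constructive_indefinite_description _ H)
  | right _ => Cx0
  end.

Inductive tree : Type := Node : list tree -> tree.
(* a forest is a list of trees (product = concatenation, 1 = nil);
   B_+ w = Node w *)
Definition forest := list tree.

Fixpoint tsize (t : tree) : nat :=
  match t with
  | Node ws => S ((fix fs (l : list tree) : nat :=
                    match l with nil => O | u :: l' => (tsize u + fs l')%nat end) ws)
  end.
Definition fsize (w : forest) : nat := fold_right (fun t n => (tsize t + n)%nat) O w.

(* product over all nodes v of t of g(|t_v|) *)
Fixpoint tnodeprod (g : nat -> Cx) (t : tree) : Cx :=
  match t with
  | Node ws => Cxmul (g (tsize t))
      ((fix fp (l : list tree) : Cx :=
          match l with nil => Cx1 | u :: l' => Cxmul (tnodeprod g u) (fp l') end) ws)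
  end.
Definition fnodeprod (g : nat -> Cx) (w : forest) : Cx :=
  fold_right (fun t acc => Cxmul (tnodeprod g t) acc) Cx1 w.

Fixpoint phi_tree (f : R -> R) (z : Cx) (t : tree) (s : R) : Cx :=
  match t with
  | Node ws =>
      cint_val (fun zeta =>
        Cxmul (Cxmul (RtoCx (f zeta)) (cpow_neg (s * zeta) z))
          ((fix pf (l : list tree) (s' : R) : Cx :=
              match l with
              | nil => Cx1
              | u :: l' => Cxmul (phi_tree f z u s') (pf l' s')
              end) ws (s * zeta)))
  end.

Definition phi_forest (f : R -> R) (z : Cx) (w : forest) (s : R) : Cx :=
  fold_right (fun t acc => Cxmul (phi_tree f z t s) acc) Cx1 w.

Definition phi_integrand (f : R -> R) (z : Cx) (w : forest) (s : R) (zeta : R) : Cx :=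
  Cxmul (Cxmul (RtoCx (f zeta)) (cpow_neg (s * zeta) z)) (phi_forest f z w (s * zeta)).

Definition Ftrans (f : R -> R) (z' : Cx) : Cx :=
  cint_val (fun zeta => Cxmul (RtoCx (f zeta)) (cpow_neg zeta z')).

(* Main.v *)
Require Import Defs.
From Stdlib Require Import Reals List Lra Lia FunctionalExtensionality ClassicalEpsilon.
From Coquelicot Require Import Coquelicot.
Open Scope R_scope.

Lemma exp_le' x y : x <= y -> exp x <= exp y.
Proof. intros [H|H]; [left; apply exp_increasing; auto| subst; lra]. Qed.

Definition impr (g : R -> R) (l : R) : Prop :=
  (forall a b, 0 < a -> a <= b -> ex_RInt g a b) /\
  forall eps, 0 < eps -> exists d M, 0 < d /\ d <= M /\
     forall a b, 0 < a -> a < d -> M < b -> Rabs (RInt g a b - l) < eps.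

Lemma impr_to g l : impr g l -> improper_int_0_inf g l.
Proof.
 intros [H1 H2]; split.
 - intros a b Ha Hab; constructor; apply ex_RInt_Reals_0; auto.
 - intros eps He; destruct (H2 eps He) as (d & M & Hd & HdM & H).
   exists d, M; split; [lra|split; [lra|]].
   intros a b pr Ha Had HMb; rewrite <- RInt_Reals; apply H; auto.
Qed.

Lemma impr_of g l : improper_int_0_inf g l -> impr g l.
Proof.
 intros [H1 H2]; split.
 - intros a b Ha Hab; destruct (H1 a b Ha Hab) as [pr]; apply ex_RInt_Reals_1; exact pr.
 - intros eps He; destruct (H2 eps He) as (d & M & Hd & HM & H).
   exists (Rmin d M), M; split; [apply Rmin_glb_lt; lra|split; [apply Rmin_r|]].
   intros a b Ha Had HMb.
   assert (Hab : a <= b) by (pose proof (Rmin_r d M); lra).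
   destruct (H1 a b Ha Hab) as [pr]. rewrite (RInt_Reals _ _ _ pr). apply H; auto.
   pose proof (Rmin_l d M); lra.
Qed.

Lemma impr_unique g l1 l2 : impr g l1 -> impr g l2 -> l1 = l2.
Proof.
 intros [_ H1] [_ H2].
 destruct (Req_dec l1 l2) as [|Hn]; auto. exfalso.
 assert (He : 0 < Rabs (l1 - l2) / 2) by (assert (l1 - l2 <> 0) by (intro; apply Hn; lra); pose proof (Rabs_pos_lt _ H); lra).
 destruct (H1 _ He) as (d1 & M1 & Hd1 & HdM1 & K1).
 destruct (H2 _ He) as (d2 & M2 & Hd2 & HdM2 & K2).
 set (a := Rmin d1 d2 / 2). set (b := Rmax M1 M2 + 1).
 assert (Hm : 0 < Rmin d1 d2) by (apply Rmin_glb_lt; auto).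
 pose proof (Rmin_l d1 d2); pose proof (Rmin_r d1 d2).
 assert (0 < a) by (unfold a; lra).
 assert (a < d1) by (unfold a; lra).
 assert (a < d2) by (unfold a; lra).
 assert (M1 < b) by (unfold b; pose proof (Rmax_l M1 M2); lra).
 assert (M2 < b) by (unfold b; pose proof (Rmax_r M1 M2); lra).
 specialize (K1 a b ltac:(auto) ltac:(auto) ltac:(auto)). specialize (K2 a b ltac:(auto) ltac:(auto) ltac:(auto)).
 revert K1 K2; generalize (RInt g a b); intros I K1 K2.
 clear -K1 K2. split_Rabs; lra.
Qed.

Lemma impr_ext g h l : (forall x, 0 < x -> g x = h x) -> impr g l -> impr h l.
Proof.
 intros E [H1 H2]; split.
 - intros a b Ha Hab. apply (ex_RInt_ext g). 2: auto.
   intros x Hx. apply E. rewrite Rmin_left in Hx; lra.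
 - intros eps He; destruct (H2 eps He) as (d & M & Hd & HdM & H).
   exists d, M; repeat split; auto. intros a b Ha Had HMb.
   rewrite <- (RInt_ext g). apply H; auto.
   intros x Hx. apply E. rewrite Rmin_left in Hx; lra.
Qed.

Lemma impr_lin g1 g2 l1 l2 k1 k2 : impr g1 l1 -> impr g2 l2 ->
  impr (fun x => k1 * g1 x + k2 * g2 x) (k1 * l1 + k2 * l2).
Proof.
 intros [A1 B1] [A2 B2].
 assert (EX : forall a b, 0 < a -> a <= b -> ex_RInt (fun x => k1 * g1 x + k2 * g2 x) a b).
 { intros a b Ha Hab.
   apply (ex_RInt_plus (V := R_NormedModule) (fun x => scal k1 (g1 x)) (fun x => scal k2 (g2 x))).
   - apply (ex_RInt_scal (V := R_NormedModule) g1); apply A1; auto.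
   - apply (ex_RInt_scal (V := R_NormedModule) g2); apply A2; auto. }
 split; [exact EX|].
 intros eps He. set (e := eps / (Rabs k1 + Rabs k2 + 1)).
 assert (Hpos : 0 < Rabs k1 + Rabs k2 + 1) by (pose proof (Rabs_pos k1); pose proof (Rabs_pos k2); lra).
 assert (He' : 0 < e) by (unfold e; apply Rdiv_lt_0_compat; lra).
 destruct (B1 e He') as (d1 & M1 & Hd1 & HdM1 & K1).
 destruct (B2 e He') as (d2 & M2 & Hd2 & HdM2 & K2).
 exists (Rmin d1 d2), (Rmax M1 M2).
 split; [apply Rmin_glb_lt; auto|].
 split; [pose proof (Rmin_l d1 d2); pose proof (Rmax_l M1 M2); lra|].
 intros a b Ha Had HMb.
 pose proof (Rmin_l d1 d2); pose proof (Rmin_r d1 d2);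
 pose proof (Rmax_l M1 M2); pose proof (Rmax_r M1 M2).
 assert (Hab : a <= b) by lra.
 assert (R : RInt (fun x => k1 * g1 x + k2 * g2 x) a b = k1 * RInt g1 a b + k2 * RInt g2 a b).
 { rewrite (RInt_plus (V := R_CompleteNormedModule) (fun x => scal k1 (g1 x)) (fun x => scal k2 (g2 x))).
   2: apply (ex_RInt_scal (V := R_NormedModule) g1); apply A1; auto.
   2: apply (ex_RInt_scal (V := R_NormedModule) g2); apply A2; auto.
   rewrite (RInt_scal (V := R_CompleteNormedModule) g1); [|apply A1; auto].
   rewrite (RInt_scal (V := R_CompleteNormedModule) g2); [|apply A2; auto]. reflexivity. }
 rewrite R.
 specialize (K1 a b Ha ltac:(lra) ltac:(lra)). specialize (K2 a b Ha ltac:(lra) ltac:(lra)).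
 replace (k1 * RInt g1 a b + k2 * RInt g2 a b - (k1 * l1 + k2 * l2)) with
   (k1 * (RInt g1 a b - l1) + k2 * (RInt g2 a b - l2)) by ring.
 eapply Rle_lt_trans; [apply Rabs_triang|]. rewrite !Rabs_mult.
 assert (X1 : Rabs k1 * Rabs (RInt g1 a b - l1) <= Rabs k1 * e) by (apply Rmult_le_compat_l; [apply Rabs_pos|lra]).
 assert (X2 : Rabs k2 * Rabs (RInt g2 a b - l2) <= Rabs k2 * e) by (apply Rmult_le_compat_l; [apply Rabs_pos|lra]).
 assert (Ee : (Rabs k1 + Rabs k2 + 1) * e = eps) by (unfold e; field; lra).
 clear -X1 X2 Ee He'. lra.
Qed.

Lemma cint_impr g L : cint g L <-> impr (fun x => fst (g x)) (fst L) /\ impr (fun x => snd (g x)) (snd L).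
Proof. unfold cint; split; intros [H1 H2]; split.
 - apply impr_of; exact H1.
 - apply impr_of; exact H2.
 - apply impr_to; exact H1.
 - apply impr_to; exact H2.
Qed.

Lemma cint_unique g L1 L2 : cint g L1 -> cint g L2 -> L1 = L2.
Proof.
 rewrite !cint_impr; intros [A1 B1] [A2 B2].
 destruct L1 as [x1 y1]; destruct L2 as [x2 y2]; simpl in *.
 f_equal; [eapply impr_unique; eauto | eapply impr_unique; eauto].
Qed.

Lemma cint_val_eq g L : cint g L -> cint_val g = L.
Proof.
 intros H. unfold cint_val.
 destruct (excluded_middle_informative (exists L, cint g L)) as [E|E].
 - destruct (constructive_indefinite_description _ E) as [L' HL']; simpl.
   eapply cint_unique; eauto.
 - exfalso; apply E; eauto.
Qed.

Lemma cint_ext g h L : (forall x, 0 < x -> g x = h x) -> cint g L -> cint h L.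
Proof.
 rewrite !cint_impr; intros E [A B]; split; eapply impr_ext; eauto;
 intros x Hx; simpl; rewrite E; auto.
Qed.

Lemma cint_scale g K L : cint g L -> cint (fun x => Cxmul K (g x)) (Cxmul K L).
Proof.
 rewrite !cint_impr; intros [A B]; destruct K as [k1 k2]; simpl; split.
 - apply (impr_ext (fun x => k1 * fst (g x) + (- k2) * snd (g x))).
   + intros; simpl; ring.
   + replace (k1 * fst L - k2 * snd L) with (k1 * fst L + (- k2) * snd L) by ring.
     apply impr_lin; auto.
 - apply (impr_ext (fun x => k1 * snd (g x) + k2 * fst (g x))).
   + intros; simpl; ring.
   + apply impr_lin; auto.
Qed.


Lemma small_pow K p eps : 0 < p -> 0 < eps ->
  exists d, 0 < d <= 1 /\ forall y, 0 < y -> y <= d -> K * exp (p * ln y) < eps.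
Proof.
 intros Hp He.
 destruct (Rle_dec K 0) as [HK|HK].
 - exists 1; split; [lra|]. intros y _ _. pose proof (exp_pos (p * ln y)). nra.
 - assert (HK' : 0 < K) by lra.
   set (t := ln (eps / (2 * K)) / p).
   exists (Rmin 1 (exp t)). split.
   + split; [apply Rmin_glb_lt; [lra|apply exp_pos]|apply Rmin_l].
   + intros y Hy Hyd.
     assert (Hyt : y <= exp t) by (pose proof (Rmin_r 1 (exp t)); lra).
     assert (Hl : ln y <= t) by (rewrite <- (ln_exp t); apply ln_le; auto).
     assert (Hpl : p * ln y <= ln (eps / (2 * K))).
     { unfold t in Hl. apply (Rmult_le_compat_l p) in Hl; [|lra].
       replace (p * (ln (eps / (2 * K)) / p)) with (ln (eps / (2 * K))) in Hl by (field; lra). lra. }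
     apply exp_le' in Hpl. rewrite exp_ln in Hpl by (apply Rdiv_lt_0_compat; lra).
     apply (Rmult_le_compat_l K) in Hpl; [|lra].
     replace (K * (eps / (2 * K))) with (eps / 2) in Hpl by (field; lra). lra.
Qed.

Lemma inv_S_pos n : 0 < / (INR n + 1).
Proof. apply Rinv_0_lt_compat; pose proof (pos_INR n); lra. Qed.

Lemma inv_S_le1 n : / (INR n + 1) <= 1.
Proof. pose proof (pos_INR n). rewrite <- Rinv_1. apply Rinv_le_contravar; lra. Qed.

Lemma inv_S_mono n m : (n <= m)%nat -> / (INR m + 1) <= / (INR n + 1).
Proof. intros H. apply le_INR in H. pose proof (pos_INR n). apply Rinv_le_contravar; lra. Qed.

Lemma inv_S_small d : 0 < d -> exists N, forall n, (N <= n)%nat -> / (INR n + 1) < d.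
Proof.
 intros Hd. destruct (archimed_cor1 d Hd) as [N [HN HN0]].
 exists N. intros n Hn. apply lt_INR in HN0. apply le_INR in Hn. simpl in HN0.
 eapply Rle_lt_trans; [|exact HN]. apply Rinv_le_contravar; lra.
Qed.

Lemma cauchy_fun (G : R -> R) K p : 0 < p ->
  (forall x y, 0 < x -> x <= y -> y <= 1 -> Rabs (G x - G y) <= K * exp (p * ln y)) ->
  exists L, forall y, 0 < y -> y <= 1 -> Rabs (G y - L) <= K * exp (p * ln y).
Proof.
 intros Hp HG.
 set (u := fun n : nat => G (/ (INR n + 1))).
 assert (Hc : Cauchy_crit u).
 { intros eps He. destruct (small_pow K p eps Hp He) as [d [Hd Hsm]].
   destruct (inv_S_small d ltac:(lra)) as [N HN].
   exists N. intros n m Hn Hm. unfold R_dist, u.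
   destruct (Nat.le_ge_cases n m) as [Hnm|Hnm].
   - rewrite Rabs_minus_sym.
     eapply Rle_lt_trans; [apply HG|].
     + apply inv_S_pos.
     + apply inv_S_mono; auto.
     + apply inv_S_le1.
     + apply Hsm; [apply inv_S_pos|left; apply HN; auto].
   - eapply Rle_lt_trans; [apply HG|].
     + apply inv_S_pos.
     + apply inv_S_mono; auto.
     + apply inv_S_le1.
     + apply Hsm; [apply inv_S_pos|left; apply HN; auto]. }
 destruct (Rcomplete.R_complete u Hc) as [L HL].
 exists L. intros y Hy Hy1.
 apply Rnot_lt_le; intro Hlt.
 set (de := Rabs (G y - L) - K * exp (p * ln y)).
 assert (Hde : 0 < de) by (unfold de; lra).
 destruct (HL de Hde) as [N1 HN1].
 destruct (inv_S_small y Hy) as [N2 HN2].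
 set (n := max N1 N2).
 specialize (HN1 n (Nat.le_max_l _ _)). specialize (HN2 n (Nat.le_max_r _ _)).
 unfold R_dist, u in HN1.
 assert (Hb := HG (/ (INR n + 1)) y (inv_S_pos n) ltac:(lra) Hy1).
 revert HN1 Hb. unfold de. generalize (G (/ (INR n + 1))) (K * exp (p * ln y)). intros a b H1 H2.
 clear -H1 H2. split_Rabs; lra.
Qed.

Lemma bound_RInt g h F a b : a <= b -> ex_RInt g a b ->
 (forall x, a <= x <= b -> is_derive F x (h x)) -> (forall x, a <= x <= b -> continuous h x) ->
 (forall x, a < x < b -> Rabs (g x) <= h x) -> Rabs (RInt g a b) <= F b - F a.
Proof.
 intros Hab Hg HD HC Hb.
 assert (Hh : is_RInt h a b (minus (F b) (F a))).
 { apply (is_RInt_derive (V:=R_CompleteNormedModule)); intros x Hx;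
   rewrite Rmin_left, Rmax_right in Hx by lra; auto. }
 assert (Eh : RInt h a b = F b - F a).
 { pose proof (is_RInt_unique (V:=R_CompleteNormedModule) _ _ _ _ Hh) as E.
   rewrite E. unfold minus, plus, opp; simpl. reflexivity. }
 assert (Exh : ex_RInt h a b) by (exists (minus (F b) (F a)); exact Hh).
 assert (U : RInt g a b <= RInt h a b).
 { apply RInt_le; auto. intros x Hx. specialize (Hb x Hx). pose proof (Rle_abs (g x)). lra. }
 assert (Exo : ex_RInt (fun x => - h x) a b) by exact (ex_RInt_opp (V:=R_NormedModule) h a b Exh).
 assert (Eo : RInt (fun x => - h x) a b = - RInt h a b) by exact (RInt_opp (V:=R_CompleteNormedModule) h a b Exh).
 assert (L : RInt (fun x => - h x) a b <= RInt g a b).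
 { apply RInt_le; auto. intros x Hx. specialize (Hb x Hx). pose proof (Rle_abs (- g x)). rewrite Rabs_Ropp in H. lra. }
 rewrite Eo, Eh in L. rewrite Eh in U. revert L U. generalize (RInt g a b). intros I L U.
 clear -L U. split_Rabs; lra.
Qed.

Lemma chasles_R g a b c : ex_RInt g a b -> ex_RInt g b c -> RInt g a b + RInt g b c = RInt g a c.
Proof. intros H1 H2. exact (RInt_Chasles (V:=R_CompleteNormedModule) g a b c H1 H2). Qed.

Lemma Lpm (a b : R) : a + b - b = a. Proof. ring. Qed.
Lemma Lpm2 (a b : R) : a + b - a = b. Proof. ring. Qed.

Lemma impr_exists (g : R -> R) al C : 0 < al < 1 ->
 (forall x, 0 < x -> continuous g x) ->
 (forall x, 0 < x -> x <= 1 -> Rabs (g x) <= C * exp (- al * ln x)) ->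
 (forall x, 1 <= x -> Rabs (g x) <= C * exp (- (1 + al) * ln x)) ->
 exists l, impr g l.
Proof.
 intros Ha Hc B0 B1.
 assert (HC : 0 <= C).
 { specialize (B0 1 Rlt_0_1 (Rle_refl 1)). pose proof (Rabs_pos (g 1)).
   pose proof (exp_pos (- al * ln 1)). nra. }
 assert (EX : forall a b, 0 < a -> a <= b -> ex_RInt g a b).
 { intros a b Ha' Hab. apply (ex_RInt_continuous (V:=R_CompleteNormedModule)).
   intros z Hz. rewrite Rmin_left, Rmax_right in Hz by lra. apply Hc; lra. }
 set (F0 := fun t => C * exp ((1 - al) * ln t) / (1 - al)).
 assert (D0 : forall x y, 0 < x -> x <= y -> y <= 1 -> Rabs (RInt g x y) <= F0 y - F0 x).
 { intros x y Hx Hxy Hy. apply (bound_RInt g (fun t => C * exp (- al * ln t))); auto.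
   - intros t Ht. unfold F0. auto_derive; [lra|].
     replace ((1 - al) * ln t) with (- al * ln t + ln t) by ring.
     rewrite exp_plus, exp_ln by lra. field. split; lra.
   - intros t Ht. apply ex_derive_continuous. auto_derive. lra.
   - intros t Ht. apply B0; lra. }
 assert (K0 : forall x y, 0 < x -> x <= y -> y <= 1 ->
    Rabs (RInt g x 1 - RInt g y 1) <= C / (1 - al) * exp ((1 - al) * ln y)).
 { intros x y Hx Hxy Hy.
   rewrite <- (chasles_R g x y 1) by (apply EX; lra).
   rewrite Lpm.
   eapply Rle_trans; [apply D0; auto|]. unfold F0.
   assert (0 <= C * exp ((1 - al) * ln x) / (1 - al)).
   { apply Rmult_le_pos; [apply Rmult_le_pos; [auto| left; apply exp_pos]|].
     left; apply Rinv_0_lt_compat; lra. }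
   unfold Rdiv in *. lra. }
 destruct (cauchy_fun (fun u => RInt g u 1) (C / (1 - al)) (1 - al)) as [L0 HL0]; [lra| exact K0 |].
 set (F1 := fun t => - (C / al) * exp (- al * ln t)).
 assert (D1 : forall x y, 1 <= x -> x <= y -> Rabs (RInt g x y) <= F1 y - F1 x).
 { intros x y Hx Hxy. apply (bound_RInt g (fun t => C * exp (- (1 + al) * ln t))); auto.
   - apply EX; lra.
   - intros t Ht. unfold F1. auto_derive; [lra|].
     replace (- (1 + al) * ln t) with (- al * ln t + - ln t) by ring.
     rewrite exp_plus, exp_Ropp, exp_ln by lra. field. split; lra.
   - intros t Ht. apply ex_derive_continuous. auto_derive. lra.
   - intros t Ht. apply B1; lra. }
 assert (K1 : forall x y, 0 < x -> x <= y -> y <= 1 ->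
    Rabs (RInt g 1 (/ x) - RInt g 1 (/ y)) <= C / al * exp (al * ln y)).
 { intros x y Hx Hxy Hy.
   assert (H1y : 1 <= / y) by (rewrite <- Rinv_1; apply Rinv_le_contravar; lra).
   assert (Hyx : / y <= / x) by (apply Rinv_le_contravar; lra).
   rewrite <- (chasles_R g 1 (/ y) (/ x)) by (apply EX; lra).
   rewrite Lpm2.
   eapply Rle_trans; [apply D1; auto|]. unfold F1.
   rewrite (ln_Rinv y) by lra.
   replace (- al * - ln y) with (al * ln y) by ring.
   assert (0 <= C / al * exp (- al * ln (/ x))).
   { apply Rmult_le_pos; [apply Rmult_le_pos; [auto| left; apply Rinv_0_lt_compat; lra]|left; apply exp_pos]. }
   lra. }
 destruct (cauchy_fun (fun u => RInt g 1 (/ u)) (C / al) al) as [L1 HL1]; [lra| exact K1 |].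
 exists (L0 + L1). split; [exact EX|].
 intros eps He.
 destruct (small_pow (C / (1 - al)) (1 - al) (eps / 2)) as [d0 [Hd0 S0]]; [lra|lra|].
 destruct (small_pow (C / al) al (eps / 2)) as [d1 [Hd1 S1]]; [lra|lra|].
 assert (Hid1 : 1 <= / d1) by (rewrite <- Rinv_1; apply Rinv_le_contravar; lra).
 exists d0, (/ d1). split; [lra|]. split; [lra|].
 intros a b Hap Had Hb.
 assert (Hbp : 0 < b) by lra.
 rewrite <- (chasles_R g a 1 b) by (apply EX; lra).
 assert (Hib : / b < d1).
 { rewrite <- (Rinv_inv d1). apply Rinv_lt_contravar; auto. apply Rmult_lt_0_compat; lra. }
 assert (Hibp : 0 < / b) by (apply Rinv_0_lt_compat; lra).
 specialize (HL0 a Hap ltac:(lra)). specialize (HL1 (/ b) Hibp ltac:(lra)).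
 rewrite Rinv_inv in HL1.
 specialize (S0 a Hap ltac:(lra)). specialize (S1 (/ b) Hibp ltac:(lra)).
 revert HL0 HL1 S0 S1. generalize (RInt g a 1) (RInt g 1 b) (C / (1 - al) * exp ((1 - al) * ln a))
   (C / al * exp (al * ln (/ b))). intros I0 I1 e0 e1 H0 H1 H2 H3.
 clear -H0 H1 H2 H3. split_Rabs; lra.
Qed.


Lemma cont_f (f : R -> R) : (forall x, 0 <= x -> continue_in f (fun y => 0 <= y) x) ->
  forall x, 0 < x -> continuous f x.
Proof.
 intros Hcont x Hx. apply continuity_pt_filterlim.
 specialize (Hcont x (Rlt_le _ _ Hx)).
 unfold continuity_pt, continue_in, limit1_in, limit_in in *.
 intros eps He. destruct (Hcont eps He) as [al [Hal H]].
 exists (Rmin al x). split; [apply Rmin_glb_lt; auto|].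
 intros y [[_ Hneq] Hd]. apply H. simpl in *. unfold R_dist in *.
 pose proof (Rmin_l al x); pose proof (Rmin_r al x).
 split; [split; [|auto]|lra].
 clear -Hd H0 H1 Hx. split_Rabs; lra.
Qed.

Lemma fabs_cont (f : R -> R) : (forall x, 0 <= x -> continue_in f (fun y => 0 <= y) x) ->
  forall c, 0 <= c -> continuity_pt (fun x => Rabs (f (Rabs x))) c.
Proof.
 intros Hcont c Hc.
 assert (H1 : continuity_pt (fun x => f (Rabs x)) c).
 { specialize (Hcont c Hc).
   unfold continuity_pt, continue_in, limit1_in, limit_in in *.
   intros eps He. destruct (Hcont eps He) as [al [Hal H]].
   exists al. split; auto. intros y [_ Hd]. simpl in *. unfold R_dist in *.
   rewrite (Rabs_pos_eq c Hc).
   destruct (Req_dec (Rabs y) c) as [E|E].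
   - rewrite E. unfold Rminus. rewrite Rplus_opp_r, Rabs_R0. auto.
   - apply H. split; [split; [apply Rabs_pos| auto]|].
     pose proof (Rabs_triang_inv2 y c). rewrite (Rabs_pos_eq c Hc) in H0. lra. }
 apply (continuity_pt_comp (fun x => f (Rabs x)) Rabs); auto.
 apply Rcontinuity_abs.
Qed.

Lemma f_bounds (f : R -> R) (c eps : R) :
  (forall x, 0 <= x -> continue_in f (fun y => 0 <= y) x) -> 0 < eps ->
  (exists K M, 0 < M /\
     forall zeta, M <= zeta -> Rabs (f zeta - c / zeta) <= K * Rpower zeta (- 1 - eps)) ->
  exists B C, (forall x, 0 < x -> x <= 1 -> Rabs (f x) <= B) /\
              (forall x, 1 <= x -> Rabs (f x) <= C / x).
Proof.
 intros Hcont Heps [K [M [HM Has]]].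
 set (Mb := Rmax 1 M).
 assert (HMb1 : 1 <= Mb) by apply Rmax_l.
 assert (HMbM : M <= Mb) by apply Rmax_r.
 assert (Hcc : forall c0, 0 <= c0 <= Mb -> continuity_pt (fun x => Rabs (f (Rabs x))) c0).
 { intros c0 Hc0. apply fabs_cont; auto; lra. }
 destruct (continuity_ab_maj (fun x => Rabs (f (Rabs x))) 0 Mb ltac:(lra) Hcc) as [Mx [HMx _]].
 set (B0 := Rabs (f (Rabs Mx))).
 assert (HB : forall x, 0 <= x -> x <= Mb -> Rabs (f x) <= B0).
 { intros x H0 H1. specialize (HMx x (conj H0 H1)). simpl in HMx. rewrite (Rabs_pos_eq x H0) in HMx; exact HMx. }
 assert (HB0 : 0 <= B0) by apply Rabs_pos.
 exists B0, (Rabs c + Rabs K + B0 * Mb). split.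
 - intros x Hx Hx1. apply HB; lra.
 - intros x Hx.
   apply (Rmult_le_reg_r x); [lra|].
   replace ((Rabs c + Rabs K + B0 * Mb) / x * x) with (Rabs c + Rabs K + B0 * Mb) by (field; lra).
   pose proof (Rabs_pos c); pose proof (Rabs_pos K).
   destruct (Rle_dec x Mb) as [Hle|Hgt].
   + assert (Rabs (f x) * x <= B0 * Mb).
     { apply Rmult_le_compat; auto; [apply Rabs_pos|lra|apply HB; lra]. }
     assert (0 <= B0 * Mb) by (apply Rmult_le_pos; lra). lra.
   + assert (HxM : M <= x) by lra.
     specialize (Has x HxM). unfold Rpower in Has.
     assert (Hln : 0 <= ln x) by (rewrite <- ln_1; apply ln_le; lra).
     assert (Hp : exp ((-1 - eps) * ln x) <= / x).
     { rewrite <- (exp_ln x) at 2 by lra. rewrite <- exp_Ropp. apply exp_le'. nra. }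
     assert (HK : K * exp ((-1 - eps) * ln x) <= Rabs K * / x).
     { pose proof (exp_pos ((-1 - eps) * ln x)). pose proof (Rle_abs K).
       apply Rle_trans with (Rabs K * exp ((-1 - eps) * ln x)); [nra|].
       apply Rmult_le_compat_l; auto. }
     assert (E1 : Rabs (f x) * x = Rabs (f x * x)) by (rewrite Rabs_mult, (Rabs_pos_eq x); lra).
     rewrite E1.
     replace (f x * x) with ((f x - c / x) * x + c) by (field; lra).
     eapply Rle_trans; [apply Rabs_triang|]. rewrite Rabs_mult, (Rabs_pos_eq x) by lra.
     assert (Rabs (f x - c / x) * x <= Rabs K).
     { apply Rle_trans with (Rabs K * / x * x); [apply Rmult_le_compat_r; lra|].
       right; field; lra. }
     assert (0 <= B0 * Mb) by (apply Rmult_le_pos; lra). lra.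
Qed.

Lemma impr_f (f : R -> R) B C a (g : R -> R) : 0 < a < 1 ->
 (forall x, 0 < x -> x <= 1 -> Rabs (f x) <= B) -> (forall x, 1 <= x -> Rabs (f x) <= C / x) ->
 (forall x, 0 < x -> continuous g x) ->
 (forall x, 0 < x -> Rabs (g x) <= Rabs (f x) * exp (- a * ln x)) -> exists l, impr g l.
Proof.
 intros Ha HB HC Hg Hb.
 apply (impr_exists g a (Rmax B C)); auto.
 - intros x Hx Hx1. eapply Rle_trans; [apply Hb; auto|].
   apply Rmult_le_compat_r; [left; apply exp_pos|].
   eapply Rle_trans; [apply HB; auto|apply Rmax_l].
 - intros x Hx. eapply Rle_trans; [apply Hb; lra|].
   replace (- (1 + a) * ln x) with (- a * ln x + - ln x) by ring.
   rewrite exp_plus, exp_Ropp, exp_ln by lra.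
   pose proof (exp_pos (- a * ln x)).
   apply Rle_trans with (C / x * exp (- a * ln x)); [apply Rmult_le_compat_r; [lra|apply HC; lra]|].
   assert (C / x <= Rmax B C / x).
   { unfold Rdiv. apply Rmult_le_compat_r; [left; apply Rinv_0_lt_compat; lra|apply Rmax_r]. }
   assert (E : Rmax B C * (exp (- a * ln x) * / x) = Rmax B C / x * exp (- a * ln x)) by (field; lra).
   rewrite E. apply Rmult_le_compat_r; lra.
Qed.

Lemma F_exists (f : R -> R) B C :
 (forall x, 0 <= x -> continue_in f (fun y => 0 <= y) x) ->
 (forall x, 0 < x -> x <= 1 -> Rabs (f x) <= B) -> (forall x, 1 <= x -> Rabs (f x) <= C / x) ->
 forall w, 0 < fst w < 1 -> exists L, cint (fun t => Cxmul (RtoCx (f t)) (cpow_neg t w)) L.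
Proof.
 intros Hcont HB HC [a b] Ha; simpl in Ha.
 pose proof (cont_f f Hcont) as Hf.
 destruct (impr_f f B C a (fun t => fst (Cxmul (RtoCx (f t)) (cpow_neg t (a, b))))) as [l1 H1]; auto.
 - intros x Hx. apply (continuous_ext (fun t => f t * (exp (- a * ln t) * cos (b * ln t)))).
   + intros t. unfold Cxmul, RtoCx, cpow_neg; simpl. ring.
   + apply (continuous_mult (K:=R_AbsRing) f (fun t => exp (- a * ln t) * cos (b * ln t))).
     * apply Hf; auto.
     * apply (ex_derive_continuous (K:=R_AbsRing) (V:=R_NormedModule) (fun t => exp (- a * ln t) * cos (b * ln t))). auto_derive. lra.
 - intros x Hx. unfold Cxmul, RtoCx, cpow_neg; simpl.
   replace (f x * (exp (- a * ln x) * cos (b * ln x)) - 0 * - (exp (- a * ln x) * sin (b * ln x)))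
     with (f x * (exp (- a * ln x) * cos (b * ln x))) by ring.
   rewrite !Rabs_mult, (Rabs_pos_eq (exp _)) by (left; apply exp_pos).
   pose proof (COS_bound (b * ln x)). pose proof (exp_pos (- a * ln x)). pose proof (Rabs_pos (f x)).
   assert (Rabs (cos (b * ln x)) <= 1) by (split_Rabs; lra).
   replace (Rabs (f x) * exp (- a * ln x)) with (Rabs (f x) * (exp (- a * ln x) * 1)) by ring.
   apply Rmult_le_compat_l; auto. apply Rmult_le_compat_l; lra.
 - destruct (impr_f f B C a (fun t => snd (Cxmul (RtoCx (f t)) (cpow_neg t (a, b))))) as [l2 H2]; auto.
   + intros x Hx. apply (continuous_ext (fun t => f t * (- (exp (- a * ln t) * sin (b * ln t))))).
     * intros t. unfold Cxmul, RtoCx, cpow_neg; simpl. ring.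
     * apply (continuous_mult (K:=R_AbsRing) f (fun t => - (exp (- a * ln t) * sin (b * ln t)))).
       -- apply Hf; auto.
       -- apply (ex_derive_continuous (K:=R_AbsRing) (V:=R_NormedModule) (fun t => - (exp (- a * ln t) * sin (b * ln t)))). auto_derive. lra.
   + intros x Hx. unfold Cxmul, RtoCx, cpow_neg; simpl.
     replace (f x * - (exp (- a * ln x) * sin (b * ln x)) + 0 * (exp (- a * ln x) * cos (b * ln x)))
       with (f x * - (exp (- a * ln x) * sin (b * ln x))) by ring.
     rewrite Rabs_mult, Rabs_Ropp, Rabs_mult, (Rabs_pos_eq (exp _)) by (left; apply exp_pos).
     pose proof (SIN_bound (b * ln x)). pose proof (exp_pos (- a * ln x)). pose proof (Rabs_pos (f x)).
     assert (Rabs (sin (b * ln x)) <= 1) by (split_Rabs; lra).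
     replace (Rabs (f x) * exp (- a * ln x)) with (Rabs (f x) * (exp (- a * ln x) * 1)) by ring.
     apply Rmult_le_compat_l; auto. apply Rmult_le_compat_l; lra.
   + exists (l1, l2). apply cint_impr. simpl. split; auto.
Qed.


Lemma cpow_neg_mul a b w : 0 < a -> 0 < b ->
  cpow_neg (a * b) w = Cxmul (cpow_neg a w) (cpow_neg b w).
Proof.
 intros Ha Hb. unfold cpow_neg, Cxmul; simpl. rewrite ln_mult by auto.
 replace (- fst w * (ln a + ln b)) with (- fst w * ln a + - fst w * ln b) by ring.
 replace (snd w * (ln a + ln b)) with (snd w * ln a + snd w * ln b) by ring.
 rewrite exp_plus, cos_plus, sin_plus. f_equal; ring.
Qed.

Lemma cpow_scale_S t m z :
  Cxmul (cpow_neg t z) (cpow_neg t (Cxscale (INR m) z)) = cpow_neg t (Cxscale (INR (S m)) z).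
Proof.
 rewrite S_INR. unfold cpow_neg, Cxmul, Cxscale; cbn [fst snd].
 replace (- ((INR m + 1) * fst z) * ln t) with (- fst z * ln t + - (INR m * fst z) * ln t) by ring.
 replace ((INR m + 1) * snd z * ln t) with (snd z * ln t + INR m * snd z * ln t) by ring.
 rewrite exp_plus, cos_plus, sin_plus. f_equal; ring.
Qed.

Lemma cpow_scale_add t m n z :
  cpow_neg t (Cxscale (INR (m + n)) z) = Cxmul (cpow_neg t (Cxscale (INR m) z)) (cpow_neg t (Cxscale (INR n) z)).
Proof.
 rewrite plus_INR. unfold cpow_neg, Cxmul, Cxscale; cbn [fst snd].
 replace (- ((INR m + INR n) * fst z) * ln t) with (- (INR m * fst z) * ln t + - (INR n * fst z) * ln t) by ring.
 replace ((INR m + INR n) * snd z * ln t) with (INR m * snd z * ln t + INR n * snd z * ln t) by ring.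
 rewrite exp_plus, cos_plus, sin_plus. f_equal; ring.
Qed.

Lemma cpow_scale_0 t z : cpow_neg t (Cxscale (INR 0) z) = Cx1.
Proof.
 unfold cpow_neg, Cxscale, Cx1; simpl.
 replace (- (0 * fst z) * ln t) with 0 by ring. replace (0 * snd z * ln t) with 0 by ring.
 rewrite exp_0, cos_0, sin_0. f_equal; ring.
Qed.

Lemma phi_tree_node f z ws s : phi_tree f z (Node ws) s = cint_val (phi_integrand f z ws s).
Proof.
 simpl. unfold phi_integrand. f_equal. apply functional_extensionality. intro t. f_equal.
 unfold phi_forest. generalize (s * t). induction ws as [|u ws IH]; intros r; simpl.
 - reflexivity.
 - rewrite IH. reflexivity.
Qed.

Lemma tsize_node ws : tsize (Node ws) = S (fsize ws).
Proof. simpl. f_equal; induction ws as [|u ws IH]; simpl; auto. Qed.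

Lemma tnodeprod_node g ws : tnodeprod g (Node ws) = Cxmul (g (S (fsize ws))) (fnodeprod g ws).
Proof.
 change (tnodeprod g (Node ws)) with (Cxmul (g (tsize (Node ws)))
   ((fix fp (l : list tree) : Cx :=
          match l with nil => Cx1 | u :: l' => Cxmul (tnodeprod g u) (fp l') end) ws)).
 rewrite tsize_node. f_equal; induction ws as [|u ws IH]; simpl; auto; rewrite IH; auto.
Qed.

Lemma In_size t w : In t w -> (tsize t <= fsize w)%nat.
Proof. induction w as [|u w IH]; simpl; [tauto|]. intros [E|H]; [subst; lia|]. specialize (IH H); lia. Qed.

Lemma tsize_pos t : (1 <= tsize t)%nat.
Proof. destruct t; rewrite tsize_node; lia. Qed.


Definition Gf f z := fun n : nat => Ftrans f (Cxscale (INR n) z).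
Definition PT f z t := forall s, 0 < s -> phi_tree f z t s =
   Cxmul (cpow_neg s (Cxscale (INR (tsize t)) z)) (tnodeprod (Gf f z) t).
Definition PF f z w := forall s, 0 < s -> phi_forest f z w s =
   Cxmul (cpow_neg s (Cxscale (INR (fsize w)) z)) (fnodeprod (Gf f z) w).

Lemma forest_from_trees f z w : (forall t, In t w -> PT f z t) -> PF f z w.
Proof.
 induction w as [|t w IH]; intros H s Hs.
 - unfold phi_forest, fnodeprod; simpl. rewrite cpow_scale_0. unfold Cxmul, Cx1; simpl. f_equal; ring.
 - change (phi_forest f z (t :: w) s) with (Cxmul (phi_tree f z t s) (phi_forest f z w s)).
   change (fnodeprod (Gf f z) (t :: w)) with (Cxmul (tnodeprod (Gf f z) t) (fnodeprod (Gf f z) w)).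
   change (fsize (t :: w)) with (tsize t + fsize w)%nat.
   rewrite (H t (or_introl eq_refl) s Hs), (IH (fun u Hu => H u (or_intror Hu)) s Hs).
   rewrite cpow_scale_add.
   generalize (cpow_neg s (Cxscale (INR (tsize t)) z)) (cpow_neg s (Cxscale (INR (fsize w)) z))
     (tnodeprod (Gf f z) t) (fnodeprod (Gf f z) w).
   intros [a1 a2] [b1 b2] [c1 c2] [d1 d2]. unfold Cxmul; simpl. f_equal; ring.
Qed.

Lemma integrand_cint f z w s :
  (exists L, cint (fun t => Cxmul (RtoCx (f t)) (cpow_neg t (Cxscale (INR (S (fsize w))) z))) L) ->
  PF f z w -> 0 < s ->
  cint (phi_integrand f z w s)
    (Cxmul (Cxmul (cpow_neg s (Cxscale (INR (S (fsize w))) z)) (fnodeprod (Gf f z) w))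
           (Gf f z (S (fsize w)))).
Proof.
 intros [L HL] HP Hs.
 assert (E : Gf f z (S (fsize w)) = L) by (unfold Gf, Ftrans; apply cint_val_eq; exact HL).
 rewrite E.
 apply (cint_ext (fun t => Cxmul (Cxmul (cpow_neg s (Cxscale (INR (S (fsize w))) z)) (fnodeprod (Gf f z) w))
     (Cxmul (RtoCx (f t)) (cpow_neg t (Cxscale (INR (S (fsize w))) z))))).
 - intros t Ht. unfold phi_integrand. rewrite (HP (s * t)) by (apply Rmult_lt_0_compat; auto).
   rewrite <- (cpow_scale_S t), <- (cpow_scale_S s).
   rewrite !(cpow_neg_mul s t) by auto.
   generalize (cpow_neg s z) (cpow_neg t z) (cpow_neg s (Cxscale (INR (fsize w)) z))
     (cpow_neg t (Cxscale (INR (fsize w)) z)) (fnodeprod (Gf f z) w) (f t).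
   intros [a1 a2] [b1 b2] [c1 c2] [d1 d2] [e1 e2] r. unfold Cxmul, RtoCx; simpl. f_equal; ring.
 - apply cint_scale; auto.
Qed.

Lemma tree_formula f z N
  (Hex : forall m, (1 <= m <= N)%nat ->
     exists L, cint (fun t => Cxmul (RtoCx (f t)) (cpow_neg t (Cxscale (INR m) z))) L) :
  forall n t, (tsize t <= n)%nat -> (tsize t <= N)%nat -> PT f z t.
Proof.
 induction n as [|n IHn]; intros t H1 H2.
 - pose proof (tsize_pos t); lia.
 - destruct t as [ws]. rewrite tsize_node in H1, H2.
   assert (HF : PF f z ws).
   { apply forest_from_trees. intros u Hu. pose proof (In_size u ws Hu).
     apply IHn; lia. }
   intros s Hs. rewrite phi_tree_node.
   rewrite (cint_val_eq _ _ (integrand_cint f z ws s (Hex (S (fsize ws)) ltac:(lia)) HF Hs)).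
   rewrite tnodeprod_node, tsize_node.
   generalize (cpow_neg s (Cxscale (INR (S (fsize ws))) z)) (fnodeprod (Gf f z) ws) (Gf f z (S (fsize ws))).
   intros [a1 a2] [b1 b2] [c1 c2]. unfold Cxmul; simpl. f_equal; ring.
Qed.


Theorem mainTheorem2
  (f : R -> R)
  (Hcont : forall x, 0 <= x -> continue_in f (fun y => 0 <= y) x)
  (c eps : R) (Heps : 0 < eps)
  (Hasym : exists K M, 0 < M /\
     forall zeta, M <= zeta -> Rabs (f zeta - c / zeta) <= K * Rpower zeta (- 1 - eps))
  (N : nat) (HN : (1 <= N)%nat)
  (z : Cx) (Hz : 0 < fst z /\ fst z < 1 / INR N) :
  (* all the defining integrals converge *)
  (forall (w : forest) (s : R), (S (fsize w) <= N)%nat -> 0 < s ->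
     exists L, cint (phi_integrand f z w s) L) /\
  (* and the closed formula holds *)
  (forall (w : forest) (s : R), (fsize w <= N)%nat -> 0 < s ->
     phi_forest f z w s =
     Cxmul (cpow_neg s (Cxscale (INR (fsize w)) z))
           (fnodeprod (fun n => Ftrans f (Cxscale (INR n) z)) w)).
Proof.
 destruct (f_bounds f c eps Hcont Heps Hasym) as [B [C [HB HC]]].
 assert (Hex : forall m, (1 <= m <= N)%nat ->
     exists L, cint (fun t => Cxmul (RtoCx (f t)) (cpow_neg t (Cxscale (INR m) z))) L).
 { intros m Hm. apply (F_exists f B C Hcont HB HC). unfold Cxscale; simpl.
   assert (HN' : 0 < INR N) by (apply lt_0_INR; lia).
   assert (Hm1 : 1 <= INR m) by (apply (le_INR 1); lia).
   assert (HmN : INR m <= INR N) by (apply le_INR; lia).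
   assert (E : INR N * fst z < 1).
   { destruct Hz as [_ Hz2]. apply (Rmult_lt_compat_l (INR N)) in Hz2; auto.
     replace (INR N * (1 / INR N)) with 1 in Hz2 by (field; lra). exact Hz2. }
   split; nra. }
 assert (HPF : forall w, (fsize w <= N)%nat -> PF f z w).
 { intros w Hw. apply forest_from_trees. intros t Ht. pose proof (In_size t w Ht).
   apply (tree_formula f z N Hex (tsize t)); lia. }
 split.
 - intros w s Hw Hs. eexists. apply integrand_cint; auto.
   + apply Hex; lia.
   + apply HPF; lia.
 - intros w s Hw Hs. apply (HPF w Hw s Hs).
Qed.
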